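(* Let $\gamma = (\mathcal{E},\mathcal{F})$ be a context for SBA whose failure model $\mathcal{F}$ is a crash failure model (hard crash $\mathit{Crash}_t$ or communications crash $\mathit{ComCrash}_t$) or an omissions failure model (sending omissions $SO_t$, receiving omissions $RO_t$, or general omissions $GO_t$), and let $P$ be a decision protocol for $\gamma$ such that $\mathcal{N} \neq \emptyset$ is valid in the interpreted system $\mathcal{I}_{P,\gamma}$. If $\mathcal{I}_{P,\gamma} \models \text{SBA}(\mathcal{N})$, then $\mathcal{I}_{P,\gamma} \models \text{SBA}(\mathcal{A})$.
   Context: Setting: $n$ agents $\mathtt{Agt}=\{1,\dots,n\}$; each agent $i$ starts with a preferred value $\mathit{init}_i \in V$ and at each time chooses an action from $\{\mathtt{noop}\}\cup\{\mathtt{decide}_i(v) \mid v\in V\}$. A context $\gamma=(\mathcal{E},\mathcal{F})$ consists of an information exchange $\mathcal{E}$ (local states, initial states, message-sending function, state-update function for each agent) and a failure model $\mathcal{F}$ (environment states and a set of adversaries, each adversary specifying message-transmission perturbations, message-reception perturbations and local-state perturbations as functions of the round). A decision protocol $P$ maps each agent's local state to an action. $\mathcal{I}_{P,\gamma}$ is the synchronous interpreted system whose runs are generated from all initial global states (initial agent states together with an adversary) by running $P$ with $\mathcal{E}$ under the chosen adversary; a run is determined by its initial global state. Points are (run, time) pairs; $(r,m)\sim_i(r',m')$ iff $r_i(m)=r'_i(m')$. An agent has a fault in a round if the adversary alters a message it sends, alters a message it receives, or perturbs its local state in that round. $\mathcal{N}(r,m)$ is the set of agents that never have a fault in run $r$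 (nonfaulty agents); $\mathcal{A}(r,m)$ is the set of agents that have no fault in rounds $1,\dots,m$ of $r$ (not yet failed). In the crash models up to $t$ agents may crash (stop sending messages from some round on, possibly sending to only some agents in the crash round; in the hard crash model the crashed agent also enters a special state $\mathit{crashed}$); in $SO_t$/$RO_t$/$GO_t$ up to $t$ agents may have sending/receiving/both kinds of message omissions. For an indexical set $S$ of agents, the specification SBA($S$) consists of: Unique-Decision: each agent $i$ performs an action $\mathtt{decide}_i(v)$ (for some $v$) at most once; Simultaneous-Agreement($S$): if $i\in S$ and $i$ performs $\mathtt{decide}_i(v)$ then at the same time all $j\in S$ perform $\mathtt{decide}_j(v)$; Validity($S$): if $i\in S$ and $i$ performs $\mathtt{decide}_i(v)$ then some agent $j$ has $\mathit{init}_j=v$. $\mathcal{I}_{P,\gamma}\models \text{SBA}(S)$ means these hold at all points. *)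

(* Defs.v *)
From mathcomp Require Import all_boot.
Set Implicit Arguments. Unset Strict Implicit. Unset Printing Implicit Defensive.

(* Rounds are numbered 1, 2, ...; round k transforms the global
   state at time k-1 into the global state at time k. *)

Inductive action (V : Type) := noop | decide of V.
Arguments noop {V}.

Section SBA.
Variables (n : nat) (V L M : Type).

Record info_exchange := InfoExchange {
  ie_init    : 'I_n -> L -> Prop;
  ie_initval : 'I_n -> L -> V;
  ie_send    : 'I_n -> L -> action V -> 'I_n -> option M;
  ie_upd     : 'I_n -> L -> action V -> ('I_n -> option M) -> L
}.

(* An adversary: perturbations as functions of the round number.
   adv_tr k i j : transmission perturbation of the message sent by i to j in round k
   adv_rc k j i : reception perturbation of the message received by j from i in round k
   adv_ls k i   : perturbation of i's local state in round k *)
Record adversary := Adversary {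
  adv_tr : nat -> 'I_n -> 'I_n -> option M -> option M;
  adv_rc : nat -> 'I_n -> 'I_n -> option M -> option M;
  adv_ls : nat -> 'I_n -> L -> L
}.

Definition protocol := 'I_n -> L -> action V.

(* A run is determined by its initial global state: initial agent states
   together with an adversary (the environment state). *)
Record run := Run { run_init : 'I_n -> L; run_adv : adversary }.

Fixpoint state (E : info_exchange) (P : protocol) (r : run) (m : nat) : 'I_n -> L :=
  match m with
  | 0 => run_init r
  | k.+1 =>
      let s := state E P r k in
      let a := run_adv r in
      fun j => adv_ls a k.+1 j
        (ie_upd E j (s j) (P j (s j))
           (fun i => adv_rc a k.+1 j i
                       (adv_tr a k.+1 i j (ie_send E i (s i) (P i (s i)) j))))
  end.

Definition act E P r m (i : 'I_n) : action V := P i (state E P r m i).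

Definition initv (E : info_exchange) (r : run) (j : 'I_n) : V :=
  ie_initval E j (run_init r j).

Definition fault (a : adversary) (k : nat) (i : 'I_n) : Prop :=
  (exists j, adv_tr a k i j <> (fun x => x)) \/
  (exists j, adv_rc a k i j <> (fun x => x)) \/
  adv_ls a k i <> (fun x => x).

Definition indexical := run -> nat -> 'I_n -> Prop.

Definition Nset : indexical := fun r _ i => forall k, 0 < k -> ~ fault (run_adv r) k i.
Definition Aset : indexical := fun r m i => forall k, 0 < k <= m -> ~ fault (run_adv r) k i.

Inductive failure_model :=
  | HardCrash of nat & L   (* Crash_t, with the special state "crashed" *)
  | ComCrash  of nat
  | SendOm    of nat
  | RecvOm    of nat
  | GenOm     of nat.

Definition drop : option M -> option M := fun _ => None.

(* behaviour of agent i under a crash adversary, with crash round ci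
   (None = never crashes); hard = Some crashed for the hard crash model *)
Definition crash_behaviour (hard : option L) (a : adversary) (i : 'I_n)
    (ci : option nat) : Prop :=
  let ls_crash k := match hard with
                    | None => adv_ls a k i = (fun x => x)
                    | Some cs => adv_ls a k i = (fun _ => cs) end in
  (forall k j, adv_rc a k i j = (fun x => x)) /\
  match ci with
  | None => forall k, (forall j, adv_tr a k i j = (fun x => x)) /\
                      adv_ls a k i = (fun x => x)
  | Some c =>
      0 < c /\
      (forall k, k < c -> (forall j, adv_tr a k i j = (fun x => x)) /\
                          adv_ls a k i = (fun x => x)) /\
      ((forall j, adv_tr a c i j = (fun x => x) \/ adv_tr a c i j = drop) /\
       ls_crash c) /\
      (forall k, c < k -> (forall j, adv_tr a k i j = drop) /\ ls_crash k)
  end.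

Definition crash_adv (hard : option L) (t : nat) (a : adversary) : Prop :=
  exists c : 'I_n -> option nat,
    #|[set i | isSome (c i)]| <= t /\ forall i, crash_behaviour hard a i (c i).

Definition omission_adv (snd rcv : bool) (t : nat) (a : adversary) : Prop :=
  exists Fs : {set 'I_n}, #|Fs| <= t /\
    (forall k i j,
       (adv_tr a k i j = (fun x => x) \/ (snd /\ i \in Fs /\ adv_tr a k i j = drop)) /\
       (adv_rc a k i j = (fun x => x) \/ (rcv /\ i \in Fs /\ adv_rc a k i j = drop))) /\
    (forall k i, adv_ls a k i = (fun x => x)).

Definition adversaries (F : failure_model) (a : adversary) : Prop :=
  match F with
  | HardCrash t cs => crash_adv (Some cs) t a
  | ComCrash t => crash_adv None t a
  | SendOm t => omission_adv true false t a
  | RecvOm t => omission_adv false true t a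
  | GenOm t => omission_adv true true t a
  end.

Definition is_run (E : info_exchange) (F : failure_model) (r : run) : Prop :=
  (forall i, ie_init E i (run_init r i)) /\ adversaries F (run_adv r).

Definition SBA (E : info_exchange) (F : failure_model) (P : protocol)
    (S : indexical) : Prop :=
  forall r, is_run E F r ->
    (forall i m m' v v', act E P r m i = decide v -> act E P r m' i = decide v' ->
                         m = m') /\
    (forall m i v, S r m i -> act E P r m i = decide v ->
       forall j, S r m j -> act E P r m j = decide v) /\
    (forall m i v, S r m i -> act E P r m i = decide v -> exists j, initv E r j = v).

Definition N_nonempty_valid (E : info_exchange) (F : failure_model) : Prop :=
  forall r, is_run E F r -> forall m, exists i, Nset r m i.

End SBA.

(* Main.v *)
From Stdlib Require Import Classical ClassicalEpsilon FunctionalExtensionality.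
Require Import Defs.
From mathcomp Require Import all_boot.

Section Aux.
Variables (n : nat) (V L M : Type).

Definition restrict (a : adversary n L M) (S : 'I_n -> bool) : adversary n L M :=
  Adversary (fun k i j => if S i then (fun x => x) else adv_tr a k i j)
            (fun k i j => if S i then (fun x => x) else adv_rc a k i j)
            (fun k i => if S i then (fun x => x) else adv_ls a k i).

Lemma nofault_id {a : adversary n L M} {k i} : ~ fault a k i ->
  (forall j, adv_tr a k i j = (fun x => x)) /\ (forall j, adv_rc a k i j = (fun x => x))
  /\ adv_ls a k i = (fun x => x).
Proof.
move=> H; split; [|split].
- move=> j; apply: NNPP => Hn; apply: H; left; by exists j.
- move=> j; apply: NNPP => Hn; apply: H; right; left; by exists j.
- apply: NNPP => Hn; apply: H; by right; right.
Qed.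

Lemma restrict_nofault a (S : 'I_n -> bool) k i : S i -> ~ fault (restrict a S) k i.
Proof.
move=> Si [[j H]|[[j H]|H]]; apply: H; by rewrite /= Si.
Qed.

Lemma state_eq (E : info_exchange n V L M) (P : protocol n V L) init a (S : 'I_n -> bool) m :
  (forall i, S i -> forall k, 0 < k <= m -> ~ fault a k i) ->
  forall k, k <= m -> state E P (Run init (restrict a S)) k = state E P (Run init a) k.
Proof.
move=> HS; elim=> [|k IH] Hk //=.
have Hk' : 0 < k.+1 <= m by rewrite Hk.
have E1 : forall i, restrict a S = restrict a S /\
   (forall j, adv_tr (restrict a S) k.+1 i j = adv_tr a k.+1 i j) /\
   (forall j, adv_rc (restrict a S) k.+1 i j = adv_rc a k.+1 i j) /\
   adv_ls (restrict a S) k.+1 i = adv_ls a k.+1 i.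
  move=> i; rewrite /=; case Si: (S i); last by [].
  have [h1 [h2 h3]] := nofault_id (HS i Si _ Hk').
  split; first by []; split; [move=> j; by rewrite h1|split; [move=> j; by rewrite h2|by rewrite h3]].
rewrite IH ?(ltnW Hk) //.
apply: functional_extensionality => j; rewrite /=.
move: (E1 j) => /= [_ [_ [_ ->]]].
f_equal. apply: f_equal; apply: functional_extensionality => i.
move: (E1 i) => /= [_ [h _]].
move: (E1 j) => /= [_ [_ [h' _]]].
by rewrite h h'.
Qed.

Lemma restrict_adv (F : failure_model L) a (S : 'I_n -> bool) :
  adversaries F a -> adversaries F (restrict a S).
Proof.
case: F => [t cs|t|t|t|t] /=.
- move=> [c [Hc Hb]]; exists (fun i => if S i then None else c i); split.
    apply: leq_trans Hc; apply: subset_leq_card; apply/subsetP => i.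
    rewrite !inE; by case: (S i).
  move=> i; case Si: (S i).
    rewrite /crash_behaviour /= Si; split=> //.
  by move: (Hb i); rewrite /crash_behaviour /= Si.
- move=> [c [Hc Hb]]; exists (fun i => if S i then None else c i); split.
    apply: leq_trans Hc; apply: subset_leq_card; apply/subsetP => i.
    rewrite !inE; by case: (S i).
  move=> i; case Si: (S i).
    rewrite /crash_behaviour /= Si; split=> //.
  by move: (Hb i); rewrite /crash_behaviour /= Si.
all: move=> [Fs [HF [H1 H2]]]; exists Fs; split=> //; split;
  [move=> k i j; rewrite /=; case: (S i); [by split; left|exact: H1]
  |move=> k i /=; case: (S i) => //; exact: H2].
Qed.

Lemma run_eta (r : run n L M) : Run (run_init r) (run_adv r) = r.
Proof. by case: r. Qed.

End Aux.

Theorem corollary5 (n : nat) (V L M : Type) (E : info_exchange n V L M)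
    (F : failure_model L) (P : protocol n V L) :
  N_nonempty_valid E F ->
  SBA E F P (@Nset n L M) ->
  SBA E F P (@Aset n L M).
Proof.
move=> _ HN r Hr.
have [UD _] := HN r Hr.
split=> //.
have key : forall m, exists r', is_run E F r' /\ initv E r' = initv E r /\
   (forall i, Aset r m i -> Nset r' m i /\ act E P r' m i = act E P r m i).
  move=> m.
  pose S := fun i => if excluded_middle_informative (Aset r m i) then true else false.
  have HS : forall i, S i -> Aset r m i.
    by move=> i; rewrite /S; case: excluded_middle_informative.
  exists (Run (run_init r) (@restrict n L M (run_adv r) S)); split; last split.
  - case: Hr => H1 H2; split=> //=; exact: restrict_adv.
  - by [].
  - move=> i Ai.
    have Si : S i by rewrite /S; case: excluded_middle_informative.
    split; first by move=> k _; exact: (@restrict_nofault n L M).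
    rewrite /act (@state_eq n V L M E P (run_init r) (run_adv r) S m HS m (leqnn m)).
    by rewrite run_eta.
split.
- move=> m i v Ai Hi j Aj.
  have [r' [Hr' [_ H]]] := key m.
  have [Ni Ei] := H i Ai; have [Nj Ej] := H j Aj.
  have [_ [Ag _]] := HN r' Hr'.
  rewrite -Ej; apply: (Ag m i) => //; by rewrite Ei.
- move=> m i v Ai Hi.
  have [r' [Hr' [Ei H]]] := key m.
  have [Ni Ei'] := H i Ai.
  have [_ [_ Va]] := HN r' Hr'.
  have [j Hj] := Va m i v Ni (etrans Ei' Hi).
  by exists j; rewrite -Ei.
Qed.
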